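(* Let $\Lambda$ be a finite or countable alphabet and $\mu$ a shift-invariant probability measure on $\Lambda^{\mathbb N}$ such that $(\Lambda^{\mathbb N},\mu,\sigma)$ is mixing of all orders but $\mu$ is not a Bernoulli (i.i.d. product) measure. Then there exist $k\ge2$, a block $B\in\Lambda^k$ and a vector $\bar p_0\in\mathbb N_0^{k-1}$ such that $\mu([B^{\bar q}])<\mu([B^{\bar p_0}])$ for all $\bar q\in\mathbb N_0^{k-1}$ with $\bar q\succ\bar p_0$.
   Context: For $B=(b_1,\dots,b_k)$ and $\bar p=(p_1,\dots,p_{k-1})\in\mathbb N_0^{k-1}$, $B^{\bar p}=(b_1,*^{p_1},b_2,*^{p_2},\dots,b_{k-1},*^{p_{k-1}},b_k)$, and $[B^{\bar p}]$ is the set of $z\in\Lambda^{\mathbb N}$ with $z_{n_i}=b_i$ for $i=1,\dots,k$, where $n_i=i+p_1+\dots+p_{i-1}$ (other coordinates arbitrary). On $\mathbb N_0^{k-1}$, $\bar p\prec\bar q$ means $p_i\le q_i$ for all $i$ with strict inequality for at least one $i$. Mixing of all orders: for all measurable $A_0,\dots,A_k$, $\mu(A_0\cap\sigma^{-n_1}A_1\cap\sigma^{-n_1-n_2}A_2\cap\dots\cap\sigma^{-n_1-\dots-n_k}A_k)\to\mu(A_0)\cdots\mu(A_k)$ as $n_1,\dots,n_k\to\infty$. A Bernoulli measure satisfies $\mu([b_1\dots b_k])=\mu([b_1])\cdots\mu([b_k])$ for all blocks. *)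

(* Defs.v *)
From mathcomp Require Import all_boot all_algebra.
From mathcomp Require Import all_classical all_reals all_analysis.
Set Implicit Arguments. Unset Strict Implicit. Unset Printing Implicit Defensive.
Import GRing.Theory Num.Theory.
Local Open Scope classical_set_scope.
Local Open Scope ring_scope.

(* Single-coordinate cylinders {z | z n = a}; since the alphabet is
   countable (with discrete sigma-algebra) they generate the product
   sigma-algebra on L^N. *)
Definition coord_cylinders (L : Type) : set (set (nat -> L)) :=
  [set A | exists (n : nat) (a : L), A = [set z | z n = a]].

Definition seqSpace (L : pointedType) := g_sigma_algebraType (@coord_cylinders L).

Definition shiftn (L : Type) (m : nat) (z : nat -> L) : nat -> L :=
  fun t => z (t + m)%N.

Definition shift_invariant (L : pointedType) (R : realType)
  (mu : probability (seqSpace L) R) : Prop :=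
  forall A : set (seqSpace L), measurable A -> mu (shiftn 1 @^-1` A) = mu A.

(* Mixing of all orders: for all k and measurable A_0..A_k,
   mu(A_0 ∩ σ^{-n_1}A_1 ∩ ... ∩ σ^{-(n_1+...+n_k)}A_k) -> prod mu(A_i)
   as n_1,...,n_k -> oo (jointly).  Here the gaps n_1..n_k are n 0 .. n (k-1). *)
Definition mixing_all_orders (L : pointedType) (R : realType)
  (mu : probability (seqSpace L) R) : Prop :=
  forall (k : nat) (A : nat -> set (seqSpace L)),
    (forall i, (i <= k)%N -> measurable (A i)) ->
    forall eps : R, 0 < eps -> exists N : nat, forall n : nat -> nat,
      (forall j, (j < k)%N -> (N <= n j)%N) ->
      `| fine (mu (\bigcap_(i in `I_k.+1)
                    (shiftn (\sum_(j < i) n j)%N @^-1` A i)))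
         - \prod_(i < k.+1) fine (mu (A i)) | < eps.

Definition cyl (L : pointedType) (b : seq L) : set (seqSpace L) :=
  [set z | [seq z i | i <- iota 0 (size b)] = b].

Definition bernoulli_measure (L : pointedType) (R : realType)
  (mu : probability (seqSpace L) R) : Prop :=
  forall b : seq L, fine (mu (cyl b)) = \prod_(x <- b) fine (mu (cyl [:: x])).

Definition gcyl (L : pointedType) (B : seq L) (p : seq nat) : set (seqSpace L) :=
  [set z | [seq z (i + \sum_(j < i) nth 0%N p j)%N | i <- iota 0 (size B)] = B].

Definition vprec (p q : seq nat) : Prop :=
  size p = size q /\
  (forall i, (i < size p)%N -> (nth 0 p i <= nth 0 q i)%N) /\
  (exists i, (i < size p)%N /\ (nth 0 p i < nth 0 q i)%N).

(* Main.v *)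
Require Import Defs.
From mathcomp Require Import all_boot all_order all_algebra.
From mathcomp Require Import all_classical all_reals all_analysis.
Import GRing.Theory Num.Theory.
Import Order.TTheory.
From mathcomp Require Import ring lra zify.
Local Open Scope classical_set_scope.
Local Open Scope ring_scope.
Set Implicit Arguments. Unset Strict Implicit. Unset Printing Implicit Defensive.

Definition fcyl (L : pointedType) (K : nat) (f : nat -> nat) (b : nat -> L) : set (seqSpace L) :=
  [set z | forall i, (i < K)%N -> z (f i) = b i].
Definition fcylP (L : pointedType) (K : nat) (P : pred nat) (f : nat -> nat) (b : nat -> L) : set (seqSpace L) :=
  [set z | forall i, (i < K)%N -> P i -> z (f i) = b i].
Definition pos (q : seq nat) (i : nat) : nat := (i + \sum_(j < i) nth 0 q j)%N.
Definition cc (R : realType) (L : pointedType) (mu : probability (seqSpace L) R) (x : L) : R :=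
  fine (mu (cyl [:: x])).
Definition incr (K : nat) (f : nat -> nat) := forall i j, (i < j)%N -> (j < K)%N -> (f i < f j)%N.

Lemma gen_meas (L : pointedType) (n : nat) (a : L) :
  measurable ([set z | z n = a] : set (seqSpace L)).
Proof. apply: sub_sigma_algebra. by exists n, a. Qed.

Lemma fcylP_meas (L : pointedType) K P f b : measurable (@fcylP L K P f b).
Proof.
elim: K => [|K IH].
  have -> : @fcylP L 0 P f b = setT by apply/seteqP; split=> z //= _ i.
  exact: measurableT.
have -> : @fcylP L K.+1 P f b = fcylP K P f b `&`
    (if P K then [set z | z (f K) = b K] else setT).
  apply/seteqP; split=> z /=.
    move=> H; split; first by move=> i Hi; apply: H; apply: ltnW.
    by case: ifP => // PK; apply: H.
  move=> [H1 H2] i; rewrite ltnS leq_eqVlt => /orP[/eqP->|]; last exact: H1.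
  by move=> PK; move: H2; rewrite PK.
apply: measurableI => //.
case: (P K); [exact: gen_meas|exact: measurableT].
Qed.

Lemma fcylE (L : pointedType) K f b : @fcyl L K f b = fcylP K predT f b.
Proof. by apply/seteqP; split=> z /= H i Hi; [move=> _|]; apply: H. Qed.

Lemma fcyl_meas (L : pointedType) K f b : measurable (@fcyl L K f b).
Proof. rewrite fcylE; exact: fcylP_meas. Qed.

Lemma fin_mu (R : realType) (L : pointedType) (mu : probability (seqSpace L) R) (A : set (seqSpace L)) :
  measurable A -> mu A = (fine (mu A))%:E.
Proof. move=> mA. by rewrite fineK // fin_num_measure. Qed.

Lemma fine_mu_ge0 (R : realType) (L : pointedType) (mu : probability (seqSpace L) R) (A : set (seqSpace L)) :
  (0 <= fine (mu A))%R.
Proof. exact/fine_ge0/measure_ge0. Qed.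

Lemma shift_fcyl (R : realType) (L : pointedType) (mu : probability (seqSpace L) R) :
  shift_invariant mu -> forall m K f b,
  mu (fcyl K (fun i => f i + m)%N b) = mu (@fcyl L K f b).
Proof.
move=> Hsh; elim=> [|m IH] K f b.
  by congr (mu _); apply/seteqP; split=> z /= H i Hi; have := H i Hi; rewrite addn0.
rewrite -[RHS](IH K f b) -[RHS]Hsh; last exact: fcyl_meas.
congr (mu _); apply/seteqP; split=> z /= H i Hi; have := H i Hi;
  by rewrite /shiftn -addnA addn1.
Qed.

Lemma cyl1E (L : pointedType) (x : L) : cyl [:: x] = fcyl 1 (fun _ => 0%N) (fun _ => x).
Proof.
apply/seteqP; split=> z /=.
  by move=> [] H i _.
by move=> H; have /= <- := H 0%N isT.
Qed.

Lemma mu_fcyl1 (R : realType) (L : pointedType) (mu : probability (seqSpace L) R) :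
  shift_invariant mu -> forall f b, fine (mu (@fcyl L 1 f b)) = cc mu (b 0%N).
Proof.
move=> Hsh f b; rewrite /cc cyl1E -(shift_fcyl Hsh (f 0%N) 1 (fun _ => 0%N)).
congr (fine (mu _)); apply/seteqP; split=> z /= H i; rewrite ltnS leqn0 => /eqP Ei;
  by subst i; have := H 0%N isT; rewrite ?add0n.
Qed.

Lemma mu_fcyl0 (R : realType) (L : pointedType) (mu : probability (seqSpace L) R) f b :
  fine (mu (@fcyl L 0 f b)) = 1%R.
Proof.
have -> : @fcyl L 0 f b = setT by apply/seteqP; split=> z //= _ i.
by rewrite probability_setT.
Qed.

Lemma gcylE (L : pointedType) (B : seq L) q (z : seqSpace L) :
  gcyl B q z <-> forall i, (i < size B)%N -> z (pos q i) = nth point B i.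
Proof.
rewrite /gcyl /pos /=; split.
  move=> <- i; rewrite size_map size_iota => Hi.
  by rewrite (nth_map 0%N) ?size_iota // nth_iota // add0n.
move=> H; apply: (@eq_from_nth _ point); first by rewrite size_map size_iota.
move=> i; rewrite size_map size_iota => Hi.
by rewrite (nth_map 0%N) ?size_iota // nth_iota // add0n H.
Qed.

Lemma gcyl_fcyl (L : pointedType) (B : seq L) q :
  gcyl B q = fcyl (size B) (pos q) (nth point B).
Proof. by apply/seteqP; split=> z /= /gcylE. Qed.

Lemma cyl_fcyl (L : pointedType) (B : seq L) :
  cyl B = fcyl (size B) id (nth point B).
Proof.
apply/seteqP; split=> z /=.
  move=> <- i; rewrite size_map size_iota => Hi.
  by rewrite (nth_map 0%N) ?size_iota // nth_iota.
move=> H; apply: (@eq_from_nth _ point); first by rewrite size_map size_iota.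
move=> i; rewrite size_map size_iota => Hi.
by rewrite (nth_map 0%N) ?size_iota // nth_iota // add0n H.
Qed.

Lemma count_le (R : realType) (L : pointedType) (mu : probability (seqSpace L) R) :
  countable [set: L] -> forall (E : set (seqSpace L)) n (a0 : L) (c : R),
  measurable E -> (0 <= c)%R ->
  (forall a, a <> a0 -> (mu (E `&` [set z | z n = a]) <= c%:E * mu [set z | z n = a])%E) ->
  (mu (E `\` [set z | z n = a0]) <= c%:E * mu (setT `\` [set z : seqSpace L | z n = a0]))%E.
Proof.
move=> /countable_injP [phi phiI] E n a0 c mE c0 Hle.
pose H i := [set z : seqSpace L | z n <> a0 /\ phi (z n) = i].
have HE i : H i = set0 \/ exists a, a <> a0 /\ H i = [set z | z n = a].
  case: (pselect (exists a, a <> a0 /\ phi a = i)) => [[a [ha hp]]|hn].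
    right; exists a; split => //; apply/seteqP; split=> z /=.
      by move=> [h1 h2]; apply: phiI; rewrite ?inE // h2 hp.
    by move=> h; split; rewrite h.
  left; apply/seteqP; split=> z //= [h1 h2]; apply: hn; by exists (z n).
have Hm i : measurable (H i).
  by case: (HE i) => [->|[a [_ ->]]]; [exact: measurable0|exact: gen_meas].
have tH : trivIset setT H.
  by move=> i j _ _ [z [[_ h1] [_ h2]]]; rewrite -h1 -h2.
have U1 : setT `\` [set z : seqSpace L | z n = a0] = \bigcup_i H i.
  apply/seteqP; split=> z /=.
    by move=> [_ h]; exists (phi (z n)).
  by move=> [i _ [h _]].
have U2 : E `\` [set z : seqSpace L | z n = a0] = \bigcup_i (E `&` H i).
  by rewrite -setI_bigcupr -U1 setDE setDE setTI.
rewrite U1 U2 !measure_bigcup //; last first.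
- by move=> i j _ _ [z [[_ h1] [_ h2]]]; apply: tH => //; exists z.
- by move=> i _; apply: measurableI.
rewrite -nneseriesZl; last by move=> i _; apply: measure_ge0.
apply: lee_nneseries; first by move=> i _ _; apply: measure_ge0.
move=> i _; case: (HE i) => [->|[a [ha ->]]].
  by rewrite setI0 measure0 mule0.
exact: Hle.
Qed.

Lemma musetT (R : realType) (L : pointedType) (mu : probability (seqSpace L) R) :
  fine (mu [set: seqSpace L]) = 1%R.
Proof. by rewrite probability_setT. Qed.

Lemma dev (R : realType) (L : pointedType) (mu : probability (seqSpace L) R) :
  shift_invariant mu -> countable [set: L] -> forall K f (b : nat -> L),
  (forall b', fine (mu (fcyl K f b')) = \prod_(i < K) cc mu (b' i)) ->
  fine (mu (fcyl K.+1 f b)) <> \prod_(i < K.+1) cc mu (b i) ->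
  exists b' : nat -> L, (\prod_(i < K.+1) cc mu (b' i) < fine (mu (fcyl K.+1 f b')))%R.
Proof.
move=> Hsh hL K f b Hmin Hne.
case: (pselect (exists b' : nat -> L, (\prod_(i < K.+1) cc mu (b' i) < fine (mu (fcyl K.+1 f b')))%R)) => // Hno.
exfalso.
pose E := fcyl K f b.
pose pi := \prod_(i < K) cc mu (b i).
have Epi : fine (mu E) = pi by apply: Hmin.
pose G a := [set z : seqSpace L | z (f K) = a].
have Hsplit a : fcyl K.+1 f (fun i => if i == K then a else b i) = E `&` G a.
  apply/seteqP; split=> z /=.
    move=> H; split; last by have := H K (ltnSn K); rewrite eqxx.
    by move=> i Hi; have := H i (ltnW Hi); rewrite (ltn_eqF Hi).
  move=> [H1 H2] i; rewrite ltnS leq_eqVlt => /orP[/eqP->|Hi]; first by rewrite eqxx.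
  by rewrite (ltn_eqF Hi); apply: H1.
have Hprod a : \prod_(i < K.+1) cc mu (if (i : nat) == K then a else b i) = (pi * cc mu a)%R.
  rewrite big_ord_recr /= eqxx; congr (_ * _)%R.
  by apply: eq_bigr => i _; rewrite (ltn_eqF (ltn_ord i)).
have Ga a : fine (mu (G a)) = cc mu a.
  rewrite -(mu_fcyl1 Hsh (fun _ => f K) (fun _ => a)); congr (fine (mu _)).
  apply/seteqP; split=> z /=; first by move=> h i _.
  by move=> h; apply: (h 0%N).
have Hle a : (fine (mu (E `&` G a)) <= pi * cc mu a)%R.
  rewrite leNgt; apply/negP => Hlt; apply: Hno; exists (fun i => if i == K then a else b i).
  by rewrite Hprod Hsplit.
have Hb : fcyl K.+1 f b = E `&` G (b K).
  rewrite -Hsplit; apply/seteqP; split=> z /= H i Hi; rewrite (H i Hi) //;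
    by case: eqP => // ->.
have Hlt : (fine (mu (E `&` G (b K))) < pi * cc mu (b K))%R.
  rewrite lt_neqAle Hle andbT; apply/eqP => Heq; apply: Hne.
  by rewrite Hb Heq -(Hprod (b K)); apply: eq_bigr => i _; case: eqP => // ->.
have pi0 : (0 <= pi)%R by apply: prodr_ge0 => i _; exact: fine_mu_ge0.
have mE : measurable E by exact: fcyl_meas.
have mG : measurable (G (b K)) by exact: gen_meas.
have Hc := @count_le R L mu hL E (f K) (b K) pi mE pi0.
have Hc' : (mu (E `\` G (b K)) <= pi%:E * mu (setT `\` G (b K)))%E.
  apply: Hc => a ha.
  rewrite (fin_mu mu (measurableI _ _ mE (gen_meas (f K) a))) (fin_mu mu (gen_meas (f K) a)).
  by rewrite -EFinM lee_fin; have := Hle a; rewrite -Ga.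
have D1 : (mu E = mu (E `\` G (b K)) + mu (E `&` G (b K)))%E := measureDI mu mE mG.
have D2 : (mu setT = mu (setT `\` G (b K)) + mu (G (b K)))%E.
  by have := measureDI mu (@measurableT _ (seqSpace L)) mG; rewrite setTI.
move: Hc' D1 D2.
rewrite (fin_mu mu (measurableD mE mG)) (fin_mu mu (measurableD measurableT mG)).
rewrite (fin_mu mu mE) (fin_mu mu (measurableI _ _ mE mG)) (fin_mu mu mG).
rewrite (fin_mu mu measurableT) musetT.
rewrite -EFinM lee_fin -EFinD => Hx F1 F2.
have {F1}D1 := EFin_inj F1. have {F2}D2 := EFin_inj F2.
move: Hlt; rewrite -Ga Epi in D1 * => Hlt.
have : (pi = pi * fine (mu (setT `\` G (b K))) + pi * fine (mu (G (b K))))%R.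
  by rewrite -mulrDr -D2 mulr1.
lra.
Qed.

Lemma fcyl_S (L : pointedType) K f (b : nat -> L) :
  fcyl K.+1 f b = fcyl K f b `&` [set z | z (f K) = b K].
Proof.
apply/seteqP; split=> z /=.
  by move=> H; split; [move=> i Hi; apply: H; apply: ltnW|apply: H].
move=> [H1 H2] i; rewrite ltnS leq_eqVlt => /orP[/eqP->//|]; exact: H1.
Qed.

Lemma fcylP_S (L : pointedType) K P f (b : nat -> L) :
  fcylP K.+1 P f b = fcylP K P f b `&`
    (if P K then [set z | z (f K) = b K] else setT).
Proof.
apply/seteqP; split=> z /=.
  move=> H; split; first by move=> i Hi; apply: H; apply: ltnW.
  by case: ifP => // PK; apply: H.
move=> [H1 H2] i; rewrite ltnS leq_eqVlt => /orP[/eqP->|]; last exact: H1.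
by move=> PK; move: H2; rewrite PK.
Qed.

Lemma fcyl_ext (L : pointedType) K f f' (b b' : nat -> L) :
  (forall i, (i < K)%N -> f i = f' i /\ b i = b' i) -> fcyl K f b = fcyl K f' b'.
Proof.
move=> H; apply/seteqP; split=> z /= Hz i Hi; have [e1 e2] := H i Hi.
  by rewrite -e1 -e2 Hz.
by rewrite e1 e2 Hz.
Qed.

Lemma compress (R : realType) (L : pointedType) K (P : pred nat) f (b : nat -> L) :
  incr K f -> exists (x : nat -> nat) (c : nat -> L),
  [/\ incr (\sum_(i < K) (P i : nat))%N x,
      fcylP K P f b = fcyl (\sum_(i < K) (P i : nat))%N x c,
      (forall F : L -> R, \prod_(i < K) (if P i then F (b i) else 1%R) =
                          \prod_(j < \sum_(i < K) (P i : nat)) F (c j)) &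
      (forall j, (j < \sum_(i < K) (P i : nat))%N -> exists i, (i < K)%N /\ x j = f i)].
Proof.
elim: K => [|K IH] fI.
  exists id, (fun _ => point); split.
  - by move=> i j; rewrite big_ord0.
  - by rewrite big_ord0; apply/seteqP; split=> z //= _ i.
  - by move=> F; rewrite !big_ord0.
  - by move=> j; rewrite big_ord0.
have fI' : incr K f by move=> i j Hij HjK; apply: fI => //; apply: ltnW.
have [x [c [xI E Pr Or]]] := IH fI'.
rewrite big_ord_recr /=; case PK: (P K) => /=.
- set n := (\sum_(i < K) (P i : nat))%N in xI E Pr Or *.
  exists (fun j => if j == n then f K else x j), (fun j => if j == n then b K else c j).
  rewrite addn1; split.
  + move=> i j Hij; rewrite ltnS leq_eqVlt => /orP[/eqP Ej|Hj].
      subst j; rewrite (ltn_eqF Hij) eqxx.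
      have [i0 [Hi0 ->]] := Or i Hij; exact: fI.
    by rewrite (ltn_eqF Hj) (ltn_eqF (ltn_trans Hij Hj)); apply: xI.
  + rewrite fcylP_S PK fcyl_S E eqxx; congr (_ `&` _).
    by apply: fcyl_ext => i Hi; rewrite (ltn_eqF Hi).
  + move=> F; rewrite big_ord_recr /= PK Pr [in RHS]big_ord_recr /= eqxx.
    by congr (_ * _)%R; apply: eq_bigr => i _; rewrite (ltn_eqF (ltn_ord i)).
  + move=> j; rewrite ltnS leq_eqVlt => /orP[/eqP->|Hj].
      by exists K; rewrite eqxx.
    by rewrite (ltn_eqF Hj); have [i [Hi ->]] := Or j Hj; exists i; split => //; apply: ltnW.
- exists x, c; rewrite addn0; split => //.
  + by rewrite fcylP_S PK setIT.
  + by move=> F; rewrite big_ord_recr /= PK mulr1.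
  + by move=> j Hj; have [i [Hi ->]] := Or j Hj; exists i; split => //; apply: ltnW.
Qed.

Lemma pos_S q i : pos q i.+1 = (pos q i + (nth 0 q i).+1)%N.
Proof. rewrite /pos big_ord_recr /=; lia. Qed.

Lemma pos0 q : pos q 0 = 0%N.
Proof. by rewrite /pos big_ord0. Qed.

Lemma pos_incr q K : incr K (pos q).
Proof.
move=> i j Hij _; rewrite -(subnKC Hij).
elim: (j - i.+1)%N => [|d IH]; first by rewrite addn0 pos_S; lia.
rewrite addnS pos_S; lia.
Qed.

Lemma convert (R : realType) (L : pointedType) (mu : probability (seqSpace L) R) :
  shift_invariant mu -> forall k f (b : nat -> L), incr k f -> (0 < k)%N ->
  exists (B : seq L) (p : seq nat), [/\ size B = k, size p = k.-1,
    fine (mu (gcyl B p)) = fine (mu (fcyl k f b)) &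
    forall i, (i < k)%N -> nth point B i = b i].
Proof.
move=> Hsh k f b fI k0.
exists (mkseq b k), (mkseq (fun j => f j.+1 - f j - 1)%N k.-1).
have Hpos i : (i < k)%N -> pos (mkseq (fun j => f j.+1 - f j - 1)%N k.-1) i = (f i - f 0)%N.
  elim: i => [|i IH] Hi; first by rewrite pos0 subnn.
  have Hi' : (i < k)%N by apply: ltnW.
  rewrite pos_S IH // nth_mkseq; last by move: Hi; case: (k) => //.
  have h1 := fI i i.+1 (ltnSn i) Hi.
  have h2 : (f 0 <= f i)%N.
    by case: (i) Hi' => // i' Hi''; apply: ltnW; apply: fI.
  lia.
split.
- by rewrite size_mkseq.
- by rewrite size_mkseq.
- rewrite gcyl_fcyl size_mkseq -(shift_fcyl Hsh (f 0%N)).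
  congr (fine (mu _)); apply: fcyl_ext => i Hi; split; last by rewrite nth_mkseq.
  rewrite Hpos // subnK //.
  by case: (i) Hi => // i' Hi''; apply: ltnW; apply: fI.
- by move=> i Hi; rewrite nth_mkseq.
Qed.

Lemma exists_min (P : nat -> Prop) : (exists n, P n) -> exists n, P n /\ forall m, (m < n)%N -> ~ P m.
Proof.
move=> [n Pn]; elim: n {-2}n (leqnn n) Pn => [|N IH] n Hn Pn.
  by exists n; split => // m; move: Hn; rewrite leqn0 => /eqP ->.
case: (pselect (exists m, (m < n)%N /\ P m)) => [[m [Hm Pm]]|H].
  apply: (IH m) => //; lia.
exists n; split => // m Hm Pm; apply: H; by exists m.
Qed.

Definition Min (R : realType) (L : pointedType) (mu : probability (seqSpace L) R) (k : nat) :=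
  forall K f (b : nat -> L), (K < k)%N -> incr K f ->
    fine (mu (fcyl K f b)) = \prod_(i < K) cc mu (b i).

Lemma good (R : realType) (L : pointedType) (mu : probability (seqSpace L) R) :
  shift_invariant mu -> countable [set: L] -> ~ bernoulli_measure mu ->
  exists k f (b : nat -> L), [/\ (2 <= k)%N, incr k f,
    (\prod_(i < k) cc mu (b i) < fine (mu (fcyl k f b)))%R & Min mu k].
Proof.
move=> Hsh hL Hnb.
pose Bad K := exists f (b : nat -> L), incr K f /\ fine (mu (fcyl K f b)) <> \prod_(i < K) cc mu (b i).
have [k [[f [b [fI Hb]]] Hmin]] : exists k, Bad k /\ forall m, (m < k)%N -> ~ Bad m.
  apply: exists_min.
  case: (pselect (bernoulli_measure mu)) => // /existsNP [s Hs].
  exists (size s), id, (nth point s); split; first by [].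
  rewrite -cyl_fcyl => Heq; apply: Hs; rewrite Heq.
  rewrite (big_nth point) big_mkord; apply: eq_bigr => i _; by [].
have MinK : Min mu k.
  move=> K f' b' HK fI'; apply: contrapT => Hne; apply: (Hmin K HK).
  by exists f', b'.
case: k f b fI Hb Hmin MinK => [|[|K]] f b fI Hb Hmin MinK.
- by exfalso; apply: Hb; rewrite mu_fcyl0 big_ord0.
- by exfalso; apply: Hb; rewrite (mu_fcyl1 Hsh) big_ord1.
have Hm : forall b' : nat -> L, fine (mu (fcyl K.+1 f b')) = \prod_(i < K.+1) cc mu (b' i).
  move=> b'; apply: MinK => //; move=> i j Hij Hj; apply: fI => //; lia.
have [b' Hb'] := dev Hsh hL Hm Hb.
by exists K.+2, f, b'; split.
Qed.

Lemma mono_gen (u : nat -> nat) : (forall n, (u n <= u n.+1)%N) ->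
  forall m n, (m <= n)%N -> (u m <= u n)%N.
Proof. move=> H m n; apply: (@homo_leq nat u leq) => //; exact: leq_trans. Qed.

Lemma mono_ec (u : nat -> nat) : (forall n, (u n <= u n.+1)%N) ->
  ~ (forall N, exists n, (N <= u n)%N) -> exists n0, forall n, (n0 <= n)%N -> u n = u n0.
Proof.
move=> Hu /existsNP [M HM].
have HM' n : (u n < M)%N by rewrite ltnNge; apply/negP => h; apply: HM; exists n.
suff HH : forall d m, (M - u m <= d)%N -> exists n0, forall n, (n0 <= n)%N -> u n = u n0.
  exact: (HH (M - u 0%N)%N 0%N).
elim=> [|d IH] m Hd.
  by have := HM' m; lia.
case: (pselect (forall n, (m <= n)%N -> u n = u m)) => [H|/existsNP [n /not_implyP [Hmn Hne]]].
  by exists m.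
apply: (IH n); have := @mono_gen u Hu m n Hmn; lia.
Qed.

Lemma eventually_all (Pn : nat -> nat -> Prop) (Q : nat -> Prop) :
  (forall j n n', Pn j n -> (n <= n')%N -> Pn j n') ->
  (forall j, Q j -> exists n, Pn j n) ->
  forall K n1, exists n, (n1 <= n)%N /\ forall j, (j < K)%N -> Q j -> Pn j n.
Proof.
move=> Hup HQ; elim=> [|K IH] n1; first by exists n1.
have [n [Hn1 Hn]] := IH n1.
case: (pselect (Q K)) => [QK|nQK].
  have [n' Hn'] := HQ K QK.
  exists (maxn n n'); split; first by rewrite (leq_trans Hn1) // leq_maxl.
  move=> j; rewrite ltnS leq_eqVlt => /orP[/eqP->|Hj] Qj.
    by apply: Hup Hn' _; rewrite leq_maxr.
  by apply: Hup (Hn j Hj Qj) _; rewrite leq_maxl.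
exists n; split => // j; rewrite ltnS leq_eqVlt => /orP[/eqP->|Hj] Qj //.
exact: Hn.
Qed.

Definition clf (S : nat -> bool) (i : nat) : nat := (\sum_(j < i) (S j : nat))%N.

Lemma clf_S (S : nat -> bool) j : clf S j.+1 = (clf S j + S j)%N.
Proof. by rewrite /clf big_ord_recr. Qed.

Lemma clf0 (S : nat -> bool) : clf S 0 = 0%N.
Proof. by rewrite /clf big_ord0. Qed.

Lemma clf_mono (S : nat -> bool) i i' : (i <= i')%N -> (clf S i <= clf S i')%N.
Proof. apply: mono_gen => n; rewrite clf_S; exact: leq_addr. Qed.

Lemma clf_lt (S : nat -> bool) j i : S j -> (j < i)%N = (clf S j < clf S i)%N.
Proof.
move=> Sj; apply/idP/idP => H.
  by apply: (leq_trans _ (clf_mono S H)); rewrite clf_S Sj addn1.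
rewrite ltnNge; apply/negP => h; have := clf_mono S h; lia.
Qed.

Lemma clf_ivt (S : nat -> bool) K c : (c < clf S K)%N -> exists j, [/\ (j < K)%N, S j & clf S j = c].
Proof.
elim: K => [|K IH]; first by rewrite clf0.
rewrite clf_S => Hc.
case: (ltnP c (clf S K)) => [h|h]; first by have [j [? ? ?]] := IH h; exists j; split => //; lia.
case SK: (S K) Hc => /= Hc; last by lia.
by exists K; split => //; lia.
Qed.

Lemma sum_lt (P : pred nat) k : (exists i, (i < k)%N /\ ~~ P i) -> (\sum_(i < k) (P i : nat) < k)%N.
Proof.
elim: k => [|k IH] [i [Hi nP]] //.
rewrite big_ord_recr /=.
have Hle : (\sum_(i < k) (P i : nat) <= k)%N.
  rewrite -[X in (_ <= X)%N]card_ord -sum1_card; apply: leq_sum => j _; by case: (P j).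
move: Hi; rewrite ltnS leq_eqVlt => /orP[/eqP Ei|Hi].
  by subst i; rewrite (negbTE nP) addn0 ltnS.
have := IH (ex_intro _ i (conj Hi nP)); case: (P k) => /=; lia.
Qed.

Lemma prod_partition (R : realType) (cl : nat -> nat) k M (F : nat -> R) :
  (forall i, (i < k)%N -> (cl i < M)%N) ->
  \prod_(c < M) \prod_(i < k) (if cl i == c then F i else 1%R) = \prod_(i < k) F i.
Proof.
move=> Hcl; rewrite exchange_big /=; apply: eq_bigr => i _.
rewrite -big_mkcond /= (big_pred1 (Ordinal (Hcl i (ltn_ord i)))) //.
Qed.

Lemma chain_contra (R : realType) (L : pointedType) (mu : probability (seqSpace L) R) :
  mixing_all_orders mu -> forall K (B : seq L) (p : seq nat),
  size B = K.+1 -> Min mu K.+1 ->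
  (\prod_(i < K.+1) cc mu (nth point B i) < fine (mu (gcyl B p)))%R ->
  (forall p0, size p0 = K -> exists q, [/\ size q = K, vprec p0 q &
      (fine (mu (gcyl B p0)) <= fine (mu (gcyl B q)))%R]) ->
  size p = K -> False.
Proof.
move=> Hmix K B p HB Hmin Hgt Hno Hp.
pose g q := fine (mu (gcyl B q)).
have [nxt Hnxt] : {nxt : seq nat -> seq nat & forall p0, size p0 = K ->
    [/\ size (nxt p0) = K, vprec p0 (nxt p0) & (g p0 <= g (nxt p0))%R]}.
  apply: (@choice _ _ (fun p0 q => size p0 = K -> [/\ size q = K, vprec p0 q & (g p0 <= g q)%R])) => p0; case: (pselect (size p0 = K)) => [h|h].
    by have [q [? ? ?]] := Hno p0 h; exists q.
  by exists p0.
pose t n := iter n nxt p.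
have tS n : size (t n) = K by elim: n => //= n IH; have [] := Hnxt _ IH.
have tV n : vprec (t n) (t n.+1) by have [] := Hnxt _ (tS n).
have tG n : (g p <= g (t n))%R.
  elim: n => [|n IH] /=; first by [].
  by apply: (le_trans IH); have [] := Hnxt _ (tS n).
pose u j n := nth 0%N (t n) j.
have u1 j n : (u j n <= u j n.+1)%N.
  case: (ltnP j K) => hj.
    by have [_ [H _]] := tV n; apply: H; rewrite tS.
  by rewrite /u !nth_default ?tS.
have umono j m n : (m <= n)%N -> (u j m <= u j n)%N.
  exact: (@mono_gen (u j) (u1 j) m n).
pose Unb j := forall N, exists n, (N <= u j n)%N.
pose S j := `[< Unb j >].
have [n0 [_ Hn0]] : exists n0, (0 <= n0)%N /\ forall j, (j < K)%N -> ~ Unb j ->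
    forall n', (n0 <= n')%N -> u j n' = u j n0.
  apply: (@eventually_all (fun j n => forall n', (n <= n')%N -> u j n' = u j n) (fun j => ~ Unb j)).
  - move=> j a b H hab n'' hn''; rewrite H ?(leq_trans hab hn'') //; rewrite H //.
  - move=> j hj; exact: mono_ec (u1 j) hj.
have Sex : exists j, (j < K)%N /\ Unb j.
  apply: contrapT => H; have [_ [_ [i [Hi Hlt]]]] := tV n0; rewrite tS in Hi.
  have hU : ~ Unb i by move=> hU; apply: H; exists i.
  have := Hn0 i Hi hU n0.+1 (leqnSn n0).
  rewrite /u => Heq.
  have Hlt' : (nth 0%N (t n0) i < nth 0%N (t n0.+1) i)%N := Hlt.
  by move: Hlt'; rewrite Heq ltnn.
pose m := clf S K.
have m1 : (1 <= m)%N.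
  have [j [hj Uj]] := Sex.
  apply: (leq_trans _ (clf_mono S hj)); rewrite clf_S.
  have Sj : S j by rewrite /S; apply/asboolP.
  by rewrite Sj addn1.
pose r := t n0.
pose A c := fcylP K.+1 (fun i => clf S i == c) (pos r) (nth point B).
have mA : forall i, (i <= m)%N -> measurable (A i) by move=> *; exact: fcylP_meas.
pose cB := \prod_(i < K.+1) cc mu (nth point B i).
have eps0 : (0 < g p - cB)%R by rewrite subr_gt0.
have [N HN] := Hmix m A mA _ eps0.
have [n [Hnn0 Hn]] : exists n, (n0 <= n)%N /\ forall j, (j < K)%N -> Unb j -> (N + u j n0 <= u j n)%N.
  apply: (@eventually_all (fun j n => (N + u j n0 <= u j n)%N) Unb).
  - move=> j a b h hab; exact: leq_trans h (umono j a b hab).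
  - move=> j hj; have [a ha] := hj (N + u j n0)%N; by exists a.
pose d j := (u j n - u j n0)%N.
pose nn c := (\sum_(j < K | S j && (clf S j == c)) d j)%N.
pose o c := (\sum_(j < K | S j && (clf S j < c)) d j)%N.
have Hnn : forall c, (c < m)%N -> (N <= nn c)%N.
  move=> c hc; have [j [hj Sj' clj]] := clf_ivt hc.
  rewrite /nn (bigD1 (Ordinal hj)) /=; last by rewrite Sj' clj eqxx.
  have := Hn j hj (asboolW Sj'); rewrite /d; lia.
have Ho c : (\sum_(j < c) nn j)%N = o c.
  elim: c => [|c IH].
    by rewrite big_ord0 /o big_pred0 // => j; rewrite ltn0 andbF.
  rewrite big_ord_recr /= IH /o /nn [in RHS]big_mkcond [X in (X + _)%N]big_mkcond.
  rewrite [X in (_ + X)%N]big_mkcond -big_split /=.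
  apply: eq_bigr => j _; case: (S j) => //=.
  by rewrite [in RHS]ltnS; case: ltngtP => //= _; rewrite ?addn0 ?add0n.
have Hd j : (j < K)%N -> u j n = (u j n0 + d j)%N.
  by move=> hj; rewrite /d subnKC // umono.
have Hd0 j : (j < K)%N -> ~~ S j -> d j = 0%N.
  move=> hj nS; rewrite /d (Hn0 j hj _ n Hnn0) ?subnn //.
  by move=> hU; move/negP: nS; apply; apply/asboolP.
have Hpos i : (i <= K)%N -> pos (t n) i = (pos r i + o (clf S i))%N.
  move=> hi; rewrite /pos -addnA; congr (_ + _)%N.
  have E1 : (\sum_(j < i) nth 0 (t n) j = \sum_(j < i) nth 0 r j + \sum_(j < i) d j)%N.
    rewrite -big_split; apply: eq_bigr => j _; apply: Hd.
    exact: leq_trans (ltn_ord j) hi.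
  rewrite E1; congr (_ + _)%N.
  have E2 : (\sum_(j < i) d j = \sum_(j < i | S j) d j)%N.
    rewrite [RHS]big_mkcond; apply: eq_bigr => j _; case: (boolP (S j)) => // nS.
    by rewrite Hd0 //; exact: leq_trans (ltn_ord j) hi.
  rewrite E2 (@big_ord_widen_cond nat 0%N addn i K S d hi) /o; apply: eq_bigl => j.
  by case: (boolP (S j)) => //= Sj; apply: clf_lt.
have Hset : \bigcap_(c in `I_m.+1) (shiftn (\sum_(j < c) nn j) @^-1` A c) = gcyl B (t n).
  apply/seteqP; split=> z /=.
  - move=> Hz; apply/gcylE => i; rewrite HB => hi.
    have hcl : (clf S i < m.+1)%N by rewrite ltnS; apply: clf_mono; rewrite -ltnS.
    have := Hz (clf S i) hcl i hi (eqxx _).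
    by rewrite /shiftn Ho Hpos // -ltnS.
  - move=> /gcylE Hz c hc i hi /eqP hcli.
    rewrite /shiftn Ho -hcli -Hpos; last by rewrite -ltnS.
    by apply: Hz; rewrite HB.
have HA c : (c < m.+1)%N -> fine (mu (A c)) =
    \prod_(i < K.+1) (if clf S i == c then cc mu (nth point B i) else 1%R).
  move=> hc.
  have [x [c' [xI EA Pr _]]] := @compress R L K.+1 (fun i => clf S i == c) (pos r) (nth point B) (@pos_incr r K.+1).
  rewrite /A EA Pr Hmin //.
  have h : exists i, (i < K.+1)%N /\ ~~ (clf S i == c).
    case: (posnP c) => [->|c0].
      by exists K; split => //; rewrite -lt0n.
    by exists 0%N; split => //; rewrite clf0 eq_sym -lt0n.
  exact: (@sum_lt (fun i => clf S i == c) K.+1 h).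
have Hprod : \prod_(c < m.+1) fine (mu (A c)) = cB.
  rewrite (eq_bigr (fun c : 'I_m.+1 => \prod_(i < K.+1)
     (if clf S i == c then cc mu (nth point B i) else 1%R))); last by move=> c _; apply: HA.
  apply: (@prod_partition R (clf S) K.+1 m.+1 (fun i => cc mu (nth point B i))) => i hi; by rewrite ltnS; apply: clf_mono; rewrite -ltnS.
have := HN nn Hnn.
rewrite Hset Hprod => Hlt.
have := tG n.
have := ler_norm (g (t n) - cB).
rewrite /g in Hlt *.
lra.
Qed.

Theorem mainTheorem9 (R : realType) (L : pointedType)
  (hL : countable [set: L]) (mu : probability (seqSpace L) R) :
  shift_invariant mu -> mixing_all_orders mu -> ~ bernoulli_measure mu ->
  exists (k : nat) (B : seq L) (p0 : seq nat),
    [/\ (2 <= k)%N, size B = k, size p0 = k.-1 &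
      forall q : seq nat, size q = k.-1 -> vprec p0 q ->
        (mu (gcyl B q) < mu (gcyl B p0))%E].
Proof.
move=> Hsh Hmix Hnb.
have [k [f [b [k2 fI Hgt MinK]]]] := good Hsh hL Hnb.
have k0 : (0 < k)%N by apply: leq_trans k2.
have [B [p [HB Hp Hmu HBb]]] := @convert R L mu Hsh k f b fI k0.
exists k, B.
case: (pselect (exists p0, size p0 = k.-1 /\ forall q, size q = k.-1 -> vprec p0 q ->
   (mu (gcyl B q) < mu (gcyl B p0))%E)) => [[p0 [h1 h2]]|Hno].
  by exists p0; split.
exfalso.
have gm q : measurable (gcyl B q) by rewrite gcyl_fcyl; exact: fcyl_meas.
move: k2 fI Hgt MinK HB Hp Hmu HBb Hno k0; case: k => [|K] // k2 fI Hgt MinK HB Hp Hmu HBb Hno _.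
have Hgt' : (\prod_(i < K.+1) cc mu (nth point B i) < fine (mu (gcyl B p)))%R.
  rewrite Hmu; apply: le_lt_trans Hgt; rewrite le_eqVlt; apply/orP; left; apply/eqP.
  by apply: eq_bigr => i _; rewrite HBb.
apply: (chain_contra Hmix HB MinK Hgt' _ Hp).
move=> p0 hp0; apply: contrapT => H; apply: Hno; exists p0; split => // q hq hv.
rewrite (fin_mu mu (gm q)) (fin_mu mu (gm p0)) lte_fin ltNge; apply/negP => hle.
by apply: H; exists q; split.
Qed.
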